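(* Let $R$ be a commutative ring and let $R(S_\infty)$ be the set of all functions $S_\infty\to R$, with product $$(fg)(w)=\sum_{u\cdot v=w}(-1)^{\ell(u)+\ell(v)-\ell(w)}f(u)g(v),$$ the sum over pairs $(u,v)$ whose product in the degenerate Hecke algebra is $w$; let $\underline 1$ be the characteristic function of the identity permutation. Let $f,g,h\in R(S_\infty)$, and assume that for every $w\in S_\infty$ the element $\sum_{u:\,u\cdot w=w}(-1)^{\ell(u)}f(u)$ is not a zero divisor in $R$. Then (i) if $fg=f$ then $g=\underline 1$; (ii) if $fh=\underline 1$ then $hf=\underline 1$.
   Context: $S_\infty=\bigcup_nS_n$. Degenerate Hecke algebra: the $\mathbb Z$-algebra generated by $s_1,s_2,\dots$ with $s_i^2=s_i$, $s_is_j=s_js_i$ for $|i-j|>1$, $s_is_{i+1}s_i=s_{i+1}s_is_{i+1}$; each permutation is identified with the product of generators along one of its reduced words, and these products are again permutations, so the sums above are finite. $\ell$ denotes Coxeter length. This product on $R(S_\infty)$ is associative with identity $\underline 1$. *)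

(* Defs.v *)
From HB Require Import structures.
From mathcomp Require Import all_boot all_order all_algebra.
From mathcomp Require Import boolp classical_sets fsbigop.
Set Implicit Arguments. Unset Strict Implicit. Unset Printing Implicit Defensive.
Import GRing.Theory.

(* A permutation is stored in one-line notation w(0) w(1) ... w(n-1) with all
   trailing fixed points removed (a canonical form); w(j) = j for j >= n. *)
Definition canon (s : seq nat) : bool :=
  perm_eq s (iota 0 (size s)) && ((s == [::]) || (last 0 s != (size s).-1)).

Record sinf := SInf { sinf_val : seq nat; sinf_canon : canon sinf_val }.
HB.instance Definition _ := [isSub for sinf_val].
HB.instance Definition _ := [Countable of sinf by <:].

Definition app (w : sinf) (j : nat) : nat := nth j (sinf_val w) j.

Definition sinf_id : sinf := @SInf [::] isT.

Definition invs (N : nat) (g : nat -> nat) : nat :=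
  \sum_(i < N) \sum_(j < N) ((i < j) && (g j < g i)).
Definition ell (w : sinf) : nat := invs (size (sinf_val w)) (app w).

Definition s_ (i : nat) (j : nat) : nat :=
  if j == i then i.+1 else if j == i.+1 then i else j.

(* evaluation of the word a = [a1;...;ak] as the permutation s_a1 ... s_ak
   (right multiplication by s_i is precomposition with s_i) *)
Definition evalw (a : seq nat) : nat -> nat :=
  foldl (fun g i => g \o s_ i) id a.

Definition reduced_word_of (a : seq nat) (u : sinf) : Prop :=
  (forall j, evalw a j = app u j) /\ size a = ell u.

(* Multiplying out T_a1 ... T_ak with T_i^2 = T_i from left to right:
   T_x T_i = T_(x s_i) if l(x s_i) > l(x), and T_x otherwise.
   All partial products permute only {0,..,N-1}, N = max letter + 2, so their
   lengths are computed by invs N. *)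
Definition dem (a : seq nat) : nat -> nat :=
  let N := (foldr maxn 0 a).+2 in
  foldl (fun g i => if invs N g < invs N (g \o s_ i) then g \o s_ i else g) id a.

Definition hmul (u v w : sinf) : Prop :=
  exists a b, reduced_word_of a u /\ reduced_word_of b v /\
              (forall j, dem (a ++ b) j = app w j).

Local Open Scope ring_scope.
Local Open Scope classical_set_scope.

Definition hstar (R : comPzRingType) (f g : sinf -> R) : sinf -> R :=
  fun w => \sum_(p \in [set p : sinf * sinf | hmul p.1 p.2 w])
             (-1) ^+ (ell p.1 + ell p.2 - ell w)%N * f p.1 * g p.2.

Definition hone (R : comPzRingType) : sinf -> R :=
  fun w => (w == sinf_id)%:R.

Definition fix_sum (R : comPzRingType) (f : sinf -> R) (w : sinf) : R :=
  \sum_(u \in [set u : sinf | hmul u w w]) (-1) ^+ ell u * f u.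

Definition non_zero_divisor (R : comPzRingType) (a : R) : Prop :=
  forall x : R, a * x = 0 -> x = 0.

(* Main.v *)
Require Import Defs.
From mathcomp Require Import all_boot all_algebra.
From mathcomp Require Import zify ring.
Set Implicit Arguments. Unset Strict Implicit. Unset Printing Implicit Defensive.


Definition fixge (N : nat) (g : nat -> nat) := forall k, N <= k -> g k = k.
Definition fperm N g := injective g /\ fixge N g.

Lemma fperm_lt N g k : fperm N g -> k < N -> g k < N.
Proof.
move=> [inj fx] kN; rewrite ltnNge; apply/negP => H.
have := fx _ H => /inj E. lia.
Qed.

Lemma fperm_mono N M g : fperm N g -> N <= M -> fperm M g.
Proof. move=> [i f] NM; split=> // k kM; apply: f; lia. Qed.

Lemma s_inv i j : s_ i (s_ i j) = j.
Proof. rewrite /s_; do ! (case: eqP => /=); lia. Qed.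

Lemma fperm_id N : fperm N id.
Proof. by split. Qed.

Lemma fperm_s N i : i.+2 <= N -> fperm N (s_ i).
Proof.
move=> h; split; first by apply: (can_inj (s_inv i)).
move=> k kN; rewrite /s_; do ! (case: eqP => /=); lia.
Qed.

Lemma fperm_comp N g h : fperm N g -> fperm N h -> fperm N (g \o h).
Proof.
move=> [ig fg] [ih fh]; split; first by apply: inj_comp.
by move=> k kN /=; rewrite fh // fg.
Qed.

Lemma sum_reindex N h (F : nat -> nat) : fperm N h ->
  \sum_(k < N) F (h k) = \sum_(k < N) F k.
Proof.
move=> hp.
pose hN := fun k : 'I_N => Ordinal (fperm_lt hp (ltn_ord k)).
have ihN : injective hN.
  by move=> x y /(congr1 val) /= /(proj1 hp) E; apply: val_inj.
by rewrite [RHS](reindex_inj ihN).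
Qed.

Lemma sum_lt N c : \sum_(k < N) (k < c) = minn N c.
Proof.
elim: N => [|N IH]; first by rewrite big_ord0; lia.
rewrite big_ord_recr /= IH. case: (ltnP N c) => h; lia.
Qed.

Lemma sum_int N a b : \sum_(k < N) ((a <= k) && (k < b)) = minn N b - a.
Proof.
elim: N => [|N IH]; first by rewrite big_ord0; lia.
rewrite big_ord_recr /= IH. case: (ltnP N b) => h; case: (leqP a N) => h2 /=; lia.
Qed.

Lemma sum_eq1 N i (P : nat -> bool) : i < N ->
  \sum_(k < N) (((k : nat) == i) && P k) = P i.
Proof.
elim: N => [|N IH] //. rewrite big_ord_recr /= ltnS leq_eqVlt => /orP [/eqP ->|h].
  have -> : \sum_(k < N) (((k:nat) == N) && P k) = 0.
    by apply: big1 => k _; rewrite (ltn_eqF (ltn_ord k)).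
  by rewrite eqxx.
by rewrite IH // (gtn_eqF h) /= addn0.
Qed.

Lemma sum_le1 N (F : nat -> nat) p : p < N -> F p <= \sum_(k < N) F k.
Proof. by move=> h; rewrite (bigD1 (Ordinal h)) //= leq_addr. Qed.

Lemma sum_perm_lt N g c : fperm N g -> c <= N -> \sum_(k < N) (g k < c) = c.
Proof.
move=> hp hc. rewrite (sum_reindex (fun k => k < c) hp) sum_lt. lia.
Qed.

(* ---------- distribution matrices ---------- *)
Definition Fm N (g : nat -> nat) a c := \sum_(k < N) ((a <= k) && (g k < c)).

Lemma Fm_ext N g h a c : g =1 h -> Fm N g a c = Fm N h a c.
Proof. by move=> E; apply: eq_bigr => k _; rewrite E. Qed.

Lemma Fm_id N a c : c <= N -> Fm N id a c = c - a.
Proof. move=> h; rewrite /Fm sum_int; lia. Qed.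

Lemma Fm_lower N g a c : fperm N g -> c <= N -> c - a <= Fm N g a c.
Proof.
move=> hp hc.
have E : \sum_(k < N) (g k < c) =
   Fm N g a c + \sum_(k < N) ((k < a) && (g k < c)).
  rewrite /Fm -big_split /=; apply: eq_bigr => k _.
  by case: (leqP a k); case: (g k < c).
have : \sum_(k < N) ((k < a) && (g k < c)) <= \sum_(k < N) (k < a).
  by apply: leq_sum => k _; case: (k < a); case: (g k < c).
rewrite sum_lt (sum_perm_lt hp hc) in E *. lia.
Qed.

Lemma Fm_lip1 N g a b c : Fm N g a c <= (b - a) + Fm N g b c.
Proof.
have : Fm N g a c <= \sum_(k < N) ((a <= k) && (k < b)) + Fm N g b c.
  rewrite /Fm -big_split /=; apply: leq_sum => k _.
  case: (leqP a k); case: (leqP b k); case: (g k < c) => //= *; lia.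
rewrite sum_int; lia.
Qed.

Lemma Fm_lip2 N g a b c : fperm N g -> Fm N g a c <= Fm N g a b + (c - b).
Proof.
move=> hp.
have : Fm N g a c <= Fm N g a b + \sum_(k < N) ((b <= g k) && (g k < c)).
  rewrite /Fm -big_split /=; apply: leq_sum => k _.
  case: (leqP a k); case: (leqP b (g k)); case: (ltnP (g k) c) => //= *; lia.
rewrite (sum_reindex (fun k => (b <= k) && (k < c)) hp) sum_int; lia.
Qed.

Lemma Fm_split N g a c : a < N -> Fm N g a c = (g a < c) + Fm N g a.+1 c.
Proof.
move=> h.
have -> : Fm N g a c = \sum_(k < N) (((k:nat) == a) && (g k < c)) + Fm N g a.+1 c.
  rewrite /Fm -big_split /=; apply: eq_bigr => k _.
  case: (g k < c); rewrite ?andbT ?andbF //=; lia.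
by rewrite (sum_eq1 (fun k => g k < c)).
Qed.

Lemma Fm_inj N g h : fperm N g -> fperm N h ->
  (forall a c, a <= N -> c <= N -> Fm N g a c = Fm N h a c) -> g =1 h.
Proof.
move=> hg hh E k.
case: (ltnP k N) => kN; last by rewrite (proj2 hg) // (proj2 hh).
have E2 c : c <= N -> (g k < c) = (h k < c).
  move=> hc; have := E k c (ltnW kN) hc.
  rewrite !(Fm_split _ _ kN) E ?kN //. lia.
have := E2 (g k).+1 (fperm_lt hg kN).
have := E2 (h k).+1 (fperm_lt hh kN).
rewrite !ltnS leqnn. lia.
Qed.

Lemma Fm_transfer N M g a c : fixge M g -> M <= N -> a <= M -> c <= M ->
  Fm N g a c = Fm M g a c.
Proof.
move=> hf MN ha hc. elim: N MN => [|N IH] MN.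
  by have -> : M = 0 by lia.
case: (ltnP M N.+1) => h; last by have -> : M = N.+1 by lia.
rewrite /Fm big_ord_recr /= -/(Fm N g a c) IH; last by lia.
rewrite (hf N); last by lia.
have -> : (N < c) = false by lia.
by rewrite andbF addn0.
Qed.


Fixpoint mpr (X Y : nat -> nat -> nat) a c n :=
  if n is n'.+1 then minn (mpr X Y a c n') (X a n + Y n c) else X a 0 + Y 0 c.
Definition mp N X Y a c := mpr X Y a c N.

Lemma mp_le N X Y a c b : b <= N -> mp N X Y a c <= X a b + Y b c.
Proof.
rewrite /mp; elim: N => [|N IH] /=; first by rewrite leqn0 => /eqP ->.
rewrite leq_eqVlt => /orP [/eqP ->|]; first by rewrite geq_minr.
rewrite ltnS => /IH; lia.
Qed.

Lemma mp_ex N X Y a c : exists2 b, b <= N & mp N X Y a c = X a b + Y b c.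
Proof.
rewrite /mp; elim: N => [|N [b hb E]] /=; first by exists 0.
case: (leqP (mpr X Y a c N) (X a N.+1 + Y N.+1 c)) => h.
  by exists b; [lia| rewrite -E; lia].
by exists N.+1; [lia|lia].
Qed.

Lemma mp_char N X Y a c m : (forall b, b <= N -> m <= X a b + Y b c) ->
  (exists2 b, b <= N & m = X a b + Y b c) -> mp N X Y a c = m.
Proof.
move=> H [b hb E]; have [b' hb' E'] := mp_ex N X Y a c.
have := H b' hb'; have := mp_le X Y a c hb; lia.
Qed.

Lemma mp_congr N X X' Y Y' a c :
  (forall b, b <= N -> X a b = X' a b) -> (forall b, b <= N -> Y b c = Y' b c) ->
  mp N X Y a c = mp N X' Y' a c.
Proof.
move=> HX HY; rewrite /mp; elim: N HX HY => [|N IH] HX HY /=.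
  by rewrite HX ?HY.
rewrite IH ?HX ?HY // => b hb; [apply: HX|apply: HY]; lia.
Qed.

Lemma mp_assoc N X Y Z a c :
  mp N (mp N X Y) Z a c = mp N X (mp N Y Z) a c.
Proof.
have [b1 hb1 E1] := mp_ex N (mp N X Y) Z a c.
have [d1 hd1 F1] := mp_ex N X Y a b1.
have [d2 hd2 E2] := mp_ex N X (mp N Y Z) a c.
have [b2 hb2 F2] := mp_ex N Y Z d2 c.
have L1 := mp_le X (mp N Y Z) a c hd1.
have L2 := mp_le Y Z d1 c hb1.
have L3 := mp_le (mp N X Y) Z a c hb2.
have L4 := mp_le X Y a b2 hd2.
lia.
Qed.

Lemma mp_mono N X X' Y Y' a c :
  (forall b, b <= N -> X a b <= X' a b) -> (forall b, b <= N -> Y b c <= Y' b c) ->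
  mp N X Y a c <= mp N X' Y' a c.
Proof.
move=> HX HY; have [b hb E] := mp_ex N X' Y' a c.
have := mp_le X Y a c hb; have := HX b hb; have := HY b hb; lia.
Qed.

Lemma mp_idl N Y a c : a <= N ->
  (forall b, b <= N -> Y a c <= (b - a) + Y b c) ->
  mp N (Fm N id) Y a c = Y a c.
Proof.
move=> ha H; apply: mp_char.
  by move=> b hb; rewrite Fm_id //; apply: H.
by exists a => //; rewrite Fm_id // subnn.
Qed.

Lemma mp_idr N X a c : c <= N ->
  (forall b, b <= N -> X a c <= X a b + (c - b)) ->
  mp N X (Fm N id) a c = X a c.
Proof.
move=> hc H; apply: mp_char.
  by move=> b hb; rewrite Fm_id //; apply: H.
by exists c => //; rewrite Fm_id // subnn addn0.
Qed.

Definition stepf (g : nat -> nat) i : nat -> nat :=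
  if g i < g i.+1 then g \o s_ i else g.

Lemma stepf_ext g h i : g =1 h -> stepf g i =1 stepf h i.
Proof. by move=> E k; rewrite /stepf !E; case: ifP => _ /=; rewrite E. Qed.

Lemma fperm_stepf N g i : i.+2 <= N -> fperm N g -> fperm N (stepf g i).
Proof. by move=> hi hg; rewrite /stepf; case: ifP => // _; apply: fperm_comp => //; apply: fperm_s. Qed.

Lemma Fm_s_noti N g i a c : fperm N g -> i.+2 <= N -> a != i.+1 ->
  Fm N (g \o s_ i) a c = Fm N g a c.
Proof.
move=> hg hi ha.
rewrite /Fm -(sum_reindex (fun k => (a <= k) && (g k < c)) (fperm_s hi)).
apply: eq_bigr => k _ /=.
have -> : (a <= s_ i k) = (a <= k).
  move/eqP: ha; rewrite /s_; do ! (case: eqP => /=); lia.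
by [].
Qed.

Lemma Fm_s_id N i a b : i.+2 <= N -> a != i.+1 -> b <= N ->
  Fm N (s_ i) a b = b - a.
Proof.
move=> hi na hb; have := @Fm_s_noti N id i a b (fperm_id N) hi na.
by rewrite Fm_id // => <-.
Qed.

Lemma Fm_step N g i a c : fperm N g -> i.+2 <= N -> a <= N -> c <= N ->
  Fm N (stepf g i) a c = mp N (Fm N (s_ i)) (Fm N g) a c.
Proof.
move=> hg hi ha hc.
have hs := fperm_s hi.
case: (eqVneq a i.+1) => [ea|na]; last first.
  have -> : Fm N (stepf g i) a c = Fm N g a c.
    by rewrite /stepf; case: ifP => // _; rewrite Fm_s_noti.
  apply/esym/mp_char.
    by move=> b hb; rewrite Fm_s_id //; apply: Fm_lip1.
  by exists a => //; rewrite Fm_s_id // subnn.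
subst a.
have F1 : Fm N g i c = (g i < c) + Fm N g i.+1 c by rewrite Fm_split //; lia.
have F2 : Fm N g i.+1 c = (g i.+1 < c) + Fm N g i.+2 c by rewrite Fm_split //.
have S1 b : b <= N -> Fm N (s_ i) i.+1 b = (i < b) + (b - i.+2).
  move=> hb; rewrite Fm_split //.
  have -> : s_ i i.+1 = i by rewrite /s_; case: eqP; [lia|rewrite eqxx].
  have -> : Fm N (s_ i) i.+2 b = Fm N id i.+2 b.
    by apply: (@Fm_s_noti N id i i.+2 b (fperm_id N) hi); lia.
  rewrite /Fm sum_int; lia.
have L : Fm N (stepf g i) i.+1 c = Fm N g i.+2 c + ((g i < c) || (g i.+1 < c)).
  rewrite /stepf; case: ifP => h.
    rewrite Fm_split // Fm_s_noti //; last by lia.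
    have -> : (g \o s_ i) i.+1 = g i by rewrite /= /s_; case: eqP; [lia|rewrite eqxx].
    lia.
  rewrite F2; lia.
rewrite L; apply/esym/mp_char.
  move=> b hb; rewrite S1 //.
  case: (leqP b i) => hbi.
    have := Fm_lip1 N g i b c; rewrite F1 F2; lia.
  have := Fm_lip1 N g i.+2 b c; lia.
case: (boolP ((g i < c) || (g i.+1 < c))) => h.
  by exists i.+2 => //; rewrite S1 //; lia.
exists i; first lia.
rewrite S1 ?F1 ?F2; lia.
Qed.

Lemma invs_ext N g h : g =1 h -> invs N g = invs N h.
Proof. by move=> E; apply: eq_bigr => p _; apply: eq_bigr => q _; rewrite !E. Qed.

Lemma sum2_eq1 N i j (P : nat -> nat -> bool) : i < N -> j < N ->
  \sum_(p < N) \sum_(q < N) (((p : nat) == i) && (((q : nat) == j) && P p q)) = P i j.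
Proof.
move=> hi hj.
transitivity (\sum_(p < N) (((p : nat) == i) && P p j)); last first.
  by rewrite (sum_eq1 (fun p => P p j)).
apply: eq_bigr => p _; case: (eqVneq (p : nat) i) => [->|ne] /=.
  by rewrite (sum_eq1 (fun q => P i q)).
by apply: big1.
Qed.

Lemma s_order i p q :
  (s_ i p < s_ i q) + ((p == i) && (q == i.+1)) = (p < q) + ((p == i.+1) && (q == i)).
Proof. rewrite /s_; do ! (case: eqP => /=); lia. Qed.

Lemma invs_swap N g i : fperm N g -> i.+2 <= N ->
  invs N (g \o s_ i) + (g i.+1 < g i) = invs N g + (g i < g i.+1).
Proof.
move=> hg hi; have hs := fperm_s hi.
pose H p q := (s_ i p < s_ i q) && (g q < g p).
have E : invs N (g \o s_ i) = \sum_(p < N) \sum_(q < N) H p q.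
  rewrite /invs -(sum_reindex (fun p => \sum_(q < N) H p q) hs).
  apply: eq_bigr => p _.
  rewrite -(sum_reindex (fun q => H (s_ i p) q) hs).
  by apply: eq_bigr => q _; rewrite /H !s_inv.
rewrite E -(sum2_eq1 (fun p q => g q < g p) (ltnW hi) hi).
rewrite -(sum2_eq1 (fun p q => g q < g p) hi (ltnW hi)).
rewrite /invs -!big_split /=; apply: eq_bigr => p _.
rewrite -!big_split /=; apply: eq_bigr => q _.
rewrite /H; have := s_order i p q.
case: (g q < g p); rewrite ?andbT ?andbF //= => ->; lia.
Qed.

Lemma invs_lt N g i : fperm N g -> i.+2 <= N ->
  (invs N g < invs N (g \o s_ i)) = (g i < g i.+1).
Proof.
move=> hg hi; have := invs_swap hg hi.
have : g i != g i.+1 by apply/eqP => /(proj1 hg); lia.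
case: (ltngtP (g i) (g i.+1)) => //= *; lia.
Qed.

Lemma invs_stepf N g i : fperm N g -> i.+2 <= N ->
  invs N (stepf g i) <= (invs N g).+1.
Proof.
move=> hg hi; rewrite /stepf; case: ifP => h //.
have := invs_swap hg hi; lia.
Qed.

Lemma invs_stable N M g : fperm M g -> M <= N -> invs N g = invs M g.
Proof.
move=> hg; elim: N => [|N IH]; first by move=> h; have -> : M = 0 by lia.
case: (ltnP M N.+1) => h; last by move=> h2; have -> : M = N.+1 by lia.
move=> _; rewrite -IH; last by lia.
rewrite /invs big_ord_recr /=.
have -> : \sum_(j < N.+1) ((N < j) && (g j < g N)) = 0.
  by apply: big1 => j _; have := ltn_ord j; case: ltnP => //; lia.
rewrite addn0; apply: eq_bigr => p _; rewrite big_ord_recr /=.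
have -> : (p < N) && (g N < g p) = false.
  rewrite (proj2 hg N); last by lia.
  case: (ltnP p M) => hp.
    have := fperm_lt hg hp; case: (ltnP p N); case: ltnP => //; lia.
  by rewrite (proj2 hg p) //; case: ltnP => //; case: ltnP => //; lia.
by rewrite addn0.
Qed.

Lemma inv_le_invs N g p q : p < N -> q < N -> (p < q) && (g q < g p) <= invs N g.
Proof.
move=> hp hq; apply: (leq_trans _ (sum_le1 (fun p => \sum_(q < N) ((p < q) && (g q < g p))) hp)).
exact: (sum_le1 (fun q => (p < q) && (g q < g p)) hq).
Qed.

Lemma invs_pos N g : 0 < invs N g -> exists p q, [/\ p < q, q < N & g q < g p].
Proof.
move=> h.
case: (boolP [exists p : 'I_N, [exists q : 'I_N, (p < q) && (g q < g p)]]).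
  move=> /existsP [p /existsP [q /andP [h1 h2]]]; by exists p, q.
move=> /existsPn H; exfalso; move: h; rewrite /invs big1 // => p _.
apply: big1 => q _; move: (H p) => /existsPn /(_ q); by case: (_ && _).
Qed.

Lemma adj_desc N g p q : injective g -> p < q -> q < N -> g q < g p ->
  exists i, i.+2 <= N /\ g i.+1 < g i.
Proof.
move=> ig hpq hq hg; have E : q = p + (q - p - 1).+1 by lia.
rewrite E in hq hg; move: (q - p - 1) hq hg => d; clear E hpq.
elim: d p => [|d IH] p hq hg.
  by exists p; split; [lia|rewrite addn1 in hg].
case: (ltngtP (g p.+1) (g p)) => h.
- by exists p; split => //; lia.
- apply: (IH p.+1); first by rewrite addSn -addnS.
  by rewrite addSn -addnS; lia.
- by move/ig: h; lia.
Qed.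

Lemma invs0 N g : fperm N g -> invs N g = 0 -> g =1 id.
Proof.
move=> hg h0.
have inc p q : p < q -> q < N -> g p < g q.
  move=> hpq hq; have := inv_le_invs g (ltn_trans hpq hq) hq.
  rewrite h0 hpq /= leqn0 eqb0 -leqNgt leq_eqVlt => /orP [/eqP /(proj1 hg)|//].
  lia.
have inc2 k d : k + d < N -> g k + d <= g (k + d).
  elim: d => [|d IH] h; first by rewrite !addn0.
  have h' : k + d < N by lia.
  have I : g (k + d) < g (k + d).+1 by apply: inc; lia.
  have := IH h'; rewrite !addnS; lia.
move=> k; case: (ltnP k N) => hk; last by rewrite (proj2 hg).
have A := inc2 0 k; rewrite add0n in A.
have B := inc2 k (N.-1 - k).
have D : N.-1 < N by lia.
have C := fperm_lt hg D.
have E : k + (N.-1 - k) = N.-1 by lia.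
rewrite E in B; have := A hk; have hB : k + (N.-1 - k) < N by lia.
have := B D; simpl; lia.
Qed.

Definition wb N (a : seq nat) := all (fun i => i.+2 <= N) a.
Definition demf (a : seq nat) := foldl stepf id a.

Lemma evalw_rcons a i : evalw (rcons a i) = evalw a \o s_ i.
Proof. by rewrite /evalw foldl_rcons. Qed.
Lemma demf_rcons a i : demf (rcons a i) = stepf (demf a) i.
Proof. by rewrite /demf foldl_rcons. Qed.

Lemma wb_rcons N a i : wb N (rcons a i) = wb N a && (i.+2 <= N).
Proof. by rewrite /wb all_rcons andbC. Qed.

Lemma fperm_evalw N a : wb N a -> fperm N (evalw a).
Proof.
elim/last_ind: a => [|a i IH]; first by move=> _; exact: fperm_id.
rewrite wb_rcons evalw_rcons => /andP [h1 h2].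
by apply: fperm_comp; [apply: IH|apply: fperm_s].
Qed.

Lemma fperm_demf N a : wb N a -> fperm N (demf a).
Proof.
elim/last_ind: a => [|a i IH]; first by move=> _; exact: fperm_id.
rewrite wb_rcons demf_rcons => /andP [h1 h2].
by apply: fperm_stepf => //; apply: IH.
Qed.

Lemma foldr_maxn_ge (a : seq nat) i : i \in a -> i <= foldr maxn 0 a.
Proof.
elim: a => [|j a IH] //=; rewrite in_cons => /orP [/eqP ->|/IH]; lia.
Qed.

Lemma dem_demf a : dem a =1 demf a.
Proof.
rewrite /dem /demf; set N := (foldr maxn 0 a).+2.
have wa : wb N a by apply/allP => i /foldr_maxn_ge; rewrite /N; lia.
suff : forall b g h, wb N b -> fperm N g -> g =1 h ->
  foldl (fun g i => if invs N g < invs N (g \o s_ i) then g \o s_ i else g) g b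
   =1 foldl stepf h b.
  by move=> H; apply: H => //; exact: fperm_id.
elim=> [|i b IH] g h //= /andP [hi hb] hg E.
apply: IH => //.
  by case: ifP => // _; apply: fperm_comp => //; apply: fperm_s.
rewrite invs_lt // => k; rewrite /stepf !E; case: ifP => _ //=.
Qed.

Lemma invs_id N : invs N id = 0.
Proof.
apply: big1 => p _; apply: big1 => q _ /=.
by case: ltngtP => //= h; rewrite ltnNge ltnW.
Qed.

Lemma invs_demf N a : wb N a -> invs N (demf a) <= size a.
Proof.
elim/last_ind: a => [|a i IH]; first by move=> _; rewrite /demf /= invs_id.
rewrite wb_rcons demf_rcons size_rcons => /andP [h1 h2].
have := @invs_stepf N (demf a) i (fperm_demf h1) h2; have := IH h1; lia.
Qed.

Lemma reduced_demf N a : wb N a ->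
  invs N (evalw a) <= size a /\
  (invs N (evalw a) = size a -> demf a =1 evalw a).
Proof.
elim/last_ind: a => [|a i IH].
  by move=> _; rewrite /evalw /= invs_id.
rewrite wb_rcons => /andP [h1 h2]; have [IH1 IH2] := IH h1.
rewrite evalw_rcons size_rcons.
have hg := fperm_evalw h1.
have S := invs_swap hg h2.
split; first lia.
move=> Eq.
have E1 : invs N (evalw a) = size a by lia.
have D := IH2 E1.
have lt : evalw a i < evalw a i.+1 by move: S; case: ltnP => //; lia.
rewrite demf_rcons => k; rewrite (stepf_ext i D) /stepf lt //.
Qed.

Lemma Fm_demf_cat N a b x c : wb N (a ++ b) -> x <= N -> c <= N ->
  Fm N (demf (a ++ b)) x c = mp N (Fm N (demf b)) (Fm N (demf a)) x c.
Proof.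
rewrite /wb all_cat => /andP [wa].
elim/last_ind: b x c => [|b i IH] x c.
  move=> _ hx hc; rewrite cats0 /= mp_idl //.
  by move=> k hk; apply: Fm_lip1.
rewrite all_rcons => /andP [hi wbb] hx hc.
rewrite -rcons_cat !demf_rcons Fm_step //; last first.
  by apply: fperm_demf; rewrite /wb all_cat wa wbb.
rewrite (@mp_congr N _ (Fm N (s_ i)) _ (mp N (Fm N (demf b)) (Fm N (demf a)))) //;
  last by move=> k hk; apply: IH.
rewrite -mp_assoc; apply: mp_congr => // k hk.
by rewrite Fm_step //; apply: fperm_demf.
Qed.

Lemma exists_word N g : fperm N g ->
  exists a, [/\ wb N a, evalw a =1 g & size a = invs N g].
Proof.
move=> hg; have [n hn] : exists n, invs N g <= n by exists (invs N g).
elim: n g hn hg => [|n IH] g hn hg.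
  have h0 : invs N g = 0 by lia.
  exists [::]; split; [done | by move=> k; rewrite (invs0 hg h0) | by rewrite h0].
case: (posnP (invs N g)) => h0.
  exists [::]; split; [done | by move=> k; rewrite (invs0 hg h0) | by rewrite h0].
have [p [q [hpq hq hgq]]] := invs_pos h0.
have [i [hi hd]] := adj_desc (proj1 hg) hpq hq hgq.
have S := invs_swap hg hi.
have hg' := fperm_comp hg (fperm_s hi).
have F : (g i < g i.+1) = false by apply/negbTE; rewrite -leqNgt ltnW.
rewrite hd F in S.
have hle : invs N (g \o s_ i) <= n by lia.
have [a' [wa' ea' sa']] := IH (g \o s_ i) hle hg'.
exists (rcons a' i); split.
- by rewrite wb_rcons wa' hi.
- by move=> k; rewrite evalw_rcons /= ea' /= s_inv.
- rewrite size_rcons sa'; lia.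
Qed.


Notation sz x := (size (sinf_val x)).

Lemma canon_perm x : perm_eq (sinf_val x) (iota 0 (sz x)).
Proof. by case: x => s /= /andP []. Qed.

Lemma canon_last x : 0 < sz x -> app x (sz x).-1 != (sz x).-1.
Proof.
move=> hs; case/andP: (sinf_canon x) => _ /orP [/eqP E|h].
  by rewrite E in hs.
by rewrite /app (set_nth_default 0) ?nth_last //; lia.
Qed.

Lemma app_fix x k : sz x <= k -> app x k = k.
Proof. by move=> h; rewrite /app nth_default. Qed.

Lemma app_lt x k : k < sz x -> app x k < sz x.
Proof.
move=> h; have : app x k \in iota 0 (sz x).
  by rewrite -(perm_mem (canon_perm x)) /app mem_nth.
by rewrite mem_iota.
Qed.

Lemma fperm_app x : fperm (sz x) (app x).
Proof.
split; last by move=> k; apply: app_fix.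
have U : uniq (sinf_val x) by rewrite (perm_uniq (canon_perm x)) iota_uniq.
move=> j j'.
case: (ltnP j (sz x)) => hj; case: (ltnP j' (sz x)) => hj'.
- move=> E; apply/eqP; rewrite -(nth_uniq 0 hj hj' U).
  by move: E; rewrite /app !(set_nth_default 0) // => ->.
- rewrite (app_fix hj') => E; have := app_lt hj; lia.
- rewrite (app_fix hj) => E; have := app_lt hj'; lia.
- by rewrite (app_fix hj) (app_fix hj').
Qed.

Lemma size_le x M : fixge M (app x) -> sz x <= M.
Proof.
move=> h; rewrite leqNgt; apply/negP => hM.
have := canon_last (_ : 0 < sz x); rewrite h ?eqxx //; lia.
Qed.

Lemma sinf_ext x y : app x =1 app y -> x = y.
Proof.
move=> E.
have h1 : sz x <= sz y.
  apply: size_le => k hk; rewrite E app_fix //.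
have h2 : sz y <= sz x.
  apply: size_le => k hk; rewrite -E app_fix //.
apply: val_inj => /=; apply: (@eq_from_nth _ 0); first lia.
move=> i hi; have := E i; rewrite /app !(set_nth_default 0) //; lia.
Qed.

Fixpoint msupp (g : nat -> nat) n :=
  if n is n'.+1 then (if g n' == n' then msupp g n' else n) else 0.

Lemma msupp_le g n : msupp g n <= n.
Proof. elim: n => //= n IH; case: ifP => _; lia. Qed.

Lemma msupp_fix g n k : msupp g n <= k -> k < n -> g k = k.
Proof.
elim: n => //= n IH; case: eqP => [E|NE] h1 h2.
  case: (eqVneq k n) => [->//|ne]; apply: IH => //; lia.
lia.
Qed.

Lemma msupp_last g n : 0 < msupp g n -> g (msupp g n).-1 != (msupp g n).-1.
Proof. elim: n => //= n IH; case: eqP => [E|NE] //= _; exact/eqP. Qed.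

Lemma fixge_msupp N g : fperm N g -> fixge (msupp g N) g.
Proof.
move=> hg k hk; case: (ltnP k N) => h; first by apply: (msupp_fix hk).
exact: (proj2 hg).
Qed.

Lemma mk_canon N g : fperm N g -> canon (mkseq g (msupp g N)).
Proof.
move=> hg; set m := msupp g N.
have fm : fperm m g by split; [exact: (proj1 hg)| exact: fixge_msupp].
rewrite /canon size_mkseq; apply/andP; split.
  have U : uniq (mkseq g m) by rewrite /mkseq map_inj_uniq ?iota_uniq //; exact: (proj1 hg).
  have S : {subset mkseq g m <= iota 0 m}.
    move=> y /mapP [k]; rewrite mem_iota => /andP [_ hk] ->.
    by rewrite mem_iota /=; apply: (fperm_lt fm).
  have Sz : size (iota 0 m) <= size (mkseq g m) by rewrite size_iota size_mkseq.
  have [_ E] := uniq_min_size U S Sz.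
  by apply: uniq_perm => //; exact: iota_uniq.
case: (posnP m) => hm; first by rewrite /mkseq hm.
apply/orP; right.
have := nth_last 0 (mkseq g m); rewrite size_mkseq nth_mkseq; last by lia.
move=> <-; exact: msupp_last.
Qed.

Definition mk N g (hg : fperm N g) : sinf := SInf (mk_canon hg).

Lemma app_mk N g (hg : fperm N g) : app (mk hg) =1 g.
Proof.
move=> j; rewrite /app /=.
case: (ltnP j (msupp g N)) => h; first by rewrite nth_mkseq.
by rewrite nth_default ?size_mkseq // (fixge_msupp hg).
Qed.

Lemma ell_invs x N : sz x <= N -> ell x = invs N (app x).
Proof. by move=> h; rewrite /ell (invs_stable (fperm_app x) h). Qed.

Lemma fperm_app_ge x N : sz x <= N -> fperm N (app x).
Proof. by move=> h; apply: (fperm_mono (fperm_app x)). Qed.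

Lemma exists_rw x : exists a, reduced_word_of a x /\ wb (sz x) a.
Proof.
have [a [wa ea sa]] := exists_word (fperm_app x).
by exists a; split => //; split => //; rewrite sa /ell.
Qed.

Lemma wb_mono N M a : wb N a -> N <= M -> wb M a.
Proof. move=> /allP h NM; apply/allP => i /h; lia. Qed.

Lemma rw_demf a u N : reduced_word_of a u -> sz u <= N -> wb N a ->
  demf a =1 app u.
Proof.
move=> [ea sa] hN wa.
have [_ H] := reduced_demf wa.
have E : invs N (evalw a) = size a.
  by rewrite (invs_ext _ ea) sa (ell_invs hN).
by move=> k; rewrite H // ea.
Qed.

Definition wbound (a : seq nat) := (foldr maxn 0 a).+2.
Lemma wb_bound N a : wbound a <= N -> wb N a.
Proof. move=> h; apply/allP => i /foldr_maxn_ge; rewrite /wbound in h; lia. Qed.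

Definition Mx N (x : sinf) := Fm N (app x).

Lemma HM u v w : hmul u v w -> exists N0, forall N, N0 <= N ->
  [/\ sz u <= N, sz v <= N, sz w <= N &
    forall a c, a <= N -> c <= N -> Mx N w a c = mp N (Mx N v) (Mx N u) a c].
Proof.
move=> [a [b [ra [rb E]]]].
exists (maxn (wbound (a ++ b)) (maxn (sz u) (maxn (sz v) (sz w)))) => N hN.
have wab : wb N (a ++ b) by apply: wb_bound; lia.
have wa : wb N a by move: wab; rewrite /wb all_cat => /andP [].
have wb' : wb N b by move: wab; rewrite /wb all_cat => /andP [].
split; try lia.
move=> x c hx hc.
rewrite /Mx (Fm_ext _ _ _ (fun k => esym (E k))) (Fm_ext _ _ _ (dem_demf (a ++ b))).
rewrite Fm_demf_cat //; apply: mp_congr => k hk.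
  by apply: Fm_ext; apply: (@rw_demf b v N rb); [lia|exact: wb'].
by apply: Fm_ext; apply: (@rw_demf a u N ra); [lia|exact: wa].
Qed.

Lemma LEN u v w : hmul u v w -> ell w <= ell u + ell v.
Proof.
move=> [a [b [[ea sa] [[eb sb] E]]]].
set N := maxn (wbound (a ++ b)) (sz w).
have wab : wb N (a ++ b) by apply: wb_bound; lia.
rewrite (ell_invs (_ : sz w <= N)); last by lia.
rewrite (invs_ext _ (fun k => esym (E k))) (invs_ext _ (dem_demf (a ++ b))).
rewrite -sa -sb -size_cat; exact: invs_demf.
Qed.

Lemma EX u v : exists w, hmul u v w.
Proof.
have [a [ra _]] := exists_rw u; have [b [rb _]] := exists_rw v.
set N := wbound (a ++ b).
have hg : fperm N (demf (a ++ b)) by apply: fperm_demf; apply: wb_bound.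
exists (mk hg); exists a, b; split => //; split => // j.
by rewrite app_mk dem_demf.
Qed.

Lemma Mx_inj N x y : sz x <= N -> sz y <= N ->
  (forall a c, a <= N -> c <= N -> Mx N x a c = Mx N y a c) -> x = y.
Proof.
move=> hx hy E; apply: sinf_ext; apply: (Fm_inj (fperm_app_ge hx) (fperm_app_ge hy)).
exact: E.
Qed.

Lemma UNQ u v w w' : hmul u v w -> hmul u v w' -> w = w'.
Proof.
move=> /HM [N1 H1] /HM [N2 H2].
have [hu hv hw E1] := H1 (maxn N1 N2) (leq_maxl _ _).
have [_ _ hw' E2] := H2 (maxn N1 N2) (leq_maxr _ _).
apply: (Mx_inj hw hw') => a c ha hc; by rewrite E1 // E2.
Qed.

Lemma ASC1 u y v x w z : hmul u y x -> hmul x v w -> hmul y v z -> hmul u z w.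
Proof.
move=> h1 h2 h3; have [w' h4] := EX u z.
suff -> : w = w' by [].
move: h1 h2 h3 h4 => /HM [N1 H1] /HM [N2 H2] /HM [N3 H3] /HM [N4 H4].
set N := maxn (maxn N1 N2) (maxn N3 N4).
have [_ _ _ E1] := H1 N ltac:(lia).
have [_ _ hw E2] := H2 N ltac:(lia).
have [_ _ _ E3] := H3 N ltac:(lia).
have [_ _ hw' E4] := H4 N ltac:(lia).
apply: (Mx_inj hw hw') => a c ha hc.
rewrite E2 // E4 //.
transitivity (mp N (Mx N v) (mp N (Mx N y) (Mx N u)) a c).
  by apply: mp_congr => // k hk; rewrite E1.
rewrite -mp_assoc; apply: mp_congr => // k hk; by rewrite E3.
Qed.

Lemma ASC2 u y v x w z : hmul y v z -> hmul u z w -> hmul u y x -> hmul x v w.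
Proof.
move=> h1 h2 h3; have [w' h4] := EX x v.
suff -> : w = w' by [].
move: h1 h2 h3 h4 => /HM [N1 H1] /HM [N2 H2] /HM [N3 H3] /HM [N4 H4].
set N := maxn (maxn N1 N2) (maxn N3 N4).
have [_ _ _ E1] := H1 N ltac:(lia).
have [_ _ hw E2] := H2 N ltac:(lia).
have [_ _ _ E3] := H3 N ltac:(lia).
have [_ _ hw' E4] := H4 N ltac:(lia).
apply: (Mx_inj hw hw') => a c ha hc.
rewrite E2 // E4 //.
transitivity (mp N (mp N (Mx N v) (Mx N y)) (Mx N u) a c).
  by apply: mp_congr => // k hk; rewrite E1.
rewrite mp_assoc; apply: mp_congr => // k hk; by rewrite E3.
Qed.

Lemma ell_id : ell sinf_id = 0.
Proof. by rewrite /ell /invs big_ord0. Qed.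

Lemma rw_id : reduced_word_of [::] sinf_id.
Proof. by split; [move=> j; rewrite /app /= nth_nil | rewrite ell_id]. Qed.

Lemma H_idl v : hmul sinf_id v v.
Proof.
have [b [rb wbb]] := exists_rw v.
exists [::], b; split; first exact: rw_id; split => // j.
by rewrite dem_demf /=; apply: (@rw_demf b v (sz v) rb (leqnn _) wbb).
Qed.

Lemma H_idr u : hmul u sinf_id u.
Proof.
have [a [ra wa]] := exists_rw u.
exists a, [::]; split => //; split; first exact: rw_id.
by move=> j; rewrite cats0 dem_demf /=; apply: (@rw_demf a u (sz u) ra (leqnn _) wa).
Qed.

Lemma H_idl_inv v w : hmul sinf_id v w -> w = v.
Proof. by move=> h; apply: (UNQ h (H_idl v)). Qed.

Lemma H_idr_inv u w : hmul u sinf_id w -> w = u.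
Proof. by move=> h; apply: (UNQ h (H_idr u)). Qed.

Lemma Fm_fixfrom N g a c : (forall k, a <= k -> g k = k) ->
  Fm N g a c = Fm N id a c.
Proof.
move=> h; apply: eq_bigr => k _; case: (leqP a k) => hk //=; by rewrite h.
Qed.

Lemma fix_from_Fm N g k : fperm N g -> k < N ->
  (forall c, c <= N -> Fm N g k c = c - k) ->
  (forall c, c <= N -> Fm N g k.+1 c = c - k.+1) -> g k = k.
Proof.
move=> hg hk H1 H2.
have E c : c <= N -> (g k < c) + (c - k.+1) = c - k.
  by move=> hc; rewrite -H2 // -Fm_split // H1.
have A := E k.+1 hk.
have B := E (g k).+1 (fperm_lt hg hk).
move: A B; rewrite ltnSn /=; case: ltnP => //; lia.
Qed.

Lemma SUPP0 u v w : hmul u v w -> exists N0, forall N, N0 <= N ->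
  [/\ sz u <= N, sz v <= N, sz w <= N &
   forall a c, a <= N -> c <= N ->
     Mx N u a c <= Mx N w a c /\ Mx N v a c <= Mx N w a c].
Proof.
move=> /HM [N0 H]; exists N0 => N hN.
have [hu hv hw E] := H N hN; split => // a c ha hc.
have fu := fperm_app_ge hu; have fv := fperm_app_ge hv.
rewrite E //; split.
- rewrite -[X in X <= _](@mp_idl N (Mx N u) a c) //; last first.
    by move=> b hb; apply: Fm_lip1.
  apply: mp_mono => // b hb; rewrite Fm_id //; exact: Fm_lower.
- rewrite -[X in X <= _](@mp_idr N (Mx N v) a c) //; last first.
    by move=> b hb; apply: Fm_lip2.
  apply: mp_mono => // b hb; rewrite Fm_id //; exact: Fm_lower.
Qed.

Lemma le_fix N x w : sz x <= N -> sz w <= N ->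
  (forall a c, a <= N -> c <= N -> Mx N x a c <= Mx N w a c) -> sz x <= sz w.
Proof.
move=> hx hw H; apply: size_le => k hk.
case: (ltnP k N) => hkN; last by apply: app_fix; lia.
have fx := fperm_app_ge hx.
have EW j c : sz w <= j -> j <= N -> c <= N -> Mx N x j c = c - j.
  move=> h1 h2 hc; apply/eqP; rewrite eqn_leq; apply/andP; split.
    have := H j c h2 hc; rewrite /Mx (@Fm_fixfrom N (app w)) ?Fm_id //.
    by move=> k' hk'; apply: app_fix; lia.
  exact: Fm_lower.
apply: (fix_from_Fm fx hkN) => c hc; apply: EW => //; lia.
Qed.

Lemma SUPP u v w : hmul u v w ->
  [/\ sz u <= sz w, sz v <= sz w &
   forall N, sz w <= N -> forall a c, a <= N -> c <= N ->
     Mx N u a c <= Mx N w a c /\ Mx N v a c <= Mx N w a c].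
Proof.
move=> /SUPP0 [N0 H].
have [hu hv hw E] := H N0 (leqnn _).
have su : sz u <= sz w by apply: (le_fix hu hw) => a c ha hc; have [] := E a c ha hc.
have sv : sz v <= sz w by apply: (le_fix hv hw) => a c ha hc; have [] := E a c ha hc.
split => // N hN a c ha hc.
have [_ _ _ E1] := H (maxn N0 N) (leq_maxl _ _).
have [e1 e2] := E1 a c (leq_trans ha (leq_maxr _ _)) (leq_trans hc (leq_maxr _ _)).
have T x : sz x <= N -> Mx (maxn N0 N) x a c = Mx N x a c.
  move=> hx; apply: Fm_transfer => //; last exact: leq_maxr.
  by move=> k hk; apply: app_fix; lia.
rewrite -!T //; lia.
Qed.

Definition Phi N x := \sum_(a < N.+1) \sum_(c < N.+1) Mx N x a c.

Lemma sum_lt_strict n (F G : 'I_n -> nat) j :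
  (forall i, F i <= G i) -> F j < G j -> \sum_i F i < \sum_i G i.
Proof.
move=> H hj; rewrite (bigD1 j) // [X in _ < X](bigD1 j) //=.
by rewrite -addSn leq_add // leq_sum.
Qed.

Lemma PHI u v w N : hmul u v w -> v != w -> sz w <= N -> Phi N v < Phi N w.
Proof.
move=> h ne hN; have [_ hv E] := SUPP h.
case: (boolP [exists a : 'I_N.+1, [exists c : 'I_N.+1, Mx N v a c != Mx N w a c]]).
  move=> /existsP [a /existsP [c hac]].
  apply: (@sum_lt_strict _ _ _ a).
    move=> a'; apply: leq_sum => c' _; have [] := E N hN a' c' (ltn_ord a') (ltn_ord c'); lia.
  apply: (@sum_lt_strict _ _ _ c).
    move=> c'; have [] := E N hN a c' (ltn_ord a) (ltn_ord c'); lia.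
  have [] := E N hN a c (ltn_ord a) (ltn_ord c); lia.
move=> /existsPn H; exfalso; move/eqP: ne; apply.
apply: (Mx_inj (leq_trans hv hN) hN) => a c ha hc.
have := H (Ordinal (ha : a < N.+1)) => /existsPn /(_ (Ordinal (hc : c < N.+1))).
by rewrite negbK => /eqP.
Qed.

From mathcomp Require Import boolp classical_sets functions fsbigop.
Import GRing.Theory.
Section P4s.
Local Open Scope ring_scope.
Local Open Scope classical_set_scope.

Definition allsinf n : seq sinf :=
  undup (pmap insub (flatten [seq permutations (iota 0 k) | k <- iota 0 n.+1])).

Lemma allsinf_uniq n : uniq (allsinf n).
Proof. exact: undup_uniq. Qed.

Lemma mem_allsinf x n : (sz x <= n)%N -> x \in allsinf n.
Proof.
move=> h; rewrite mem_undup mem_pmap_sub.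
apply/flatten_mapP; exists (sz x); first by rewrite mem_iota; lia.
by rewrite mem_permutations; exact: canon_perm.
Qed.

Lemma fsum_list (R : comPzRingType) (T : choiceType) (A : set T) (F : T -> R) (r : seq T) :
  uniq r -> A `<=` [set` r] ->
  \sum_(i \in A) F i = \sum_(i <- r) (if i \in A then F i else 0).
Proof.
move=> ur Ar; rewrite fsbig_mkcond.
rewrite (_ : [set: T] = [set` predT]); last by apply/seteqP; split.
rewrite -(@bigfs _ _ _ _ r) //.
move=> i _ ni; rewrite /patch; case: ifP => // /set_mem /Ar /=.
by rewrite (negbTE ni).
Qed.

Section Ring.
Variable R : comPzRingType.

Definition K (u v w : sinf) : R :=
  if `[< hmul u v w >] then (-1) ^+ (ell u + ell v - ell w)%N else 0.

Lemma Kt u v w : hmul u v w -> K u v w = (-1) ^+ (ell u + ell v - ell w)%N.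
Proof. by move=> h; rewrite /K asboolT. Qed.

Lemma Kf u v w : ~ hmul u v w -> K u v w = 0.
Proof. by move=> h; rewrite /K asboolF. Qed.

Definition covers (L : seq sinf) w := forall u v, hmul u v w -> u \in L /\ v \in L.

Lemma covers_all w n : (sz w <= n)%N -> covers (allsinf n) w.
Proof.
move=> h u v /SUPP [hu hv _]; split; apply: mem_allsinf; lia.
Qed.

Lemma hstarL (f g : sinf -> R) w L : uniq L -> covers L w ->
  hstar f g w = \sum_(u <- L) \sum_(v <- L) K u v w * f u * g v.
Proof.
move=> uL cL; rewrite /hstar (@fsum_list _ _ _ _ [seq (x, y) | x <- L, y <- L]).
- rewrite big_allpairs; apply: eq_bigr => u _; apply: eq_bigr => v _.
  case: (pselect (hmul u v w)) => h.
    by rewrite mem_set // Kt.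
  rewrite Kf // !mul0r; case: ifP => // /set_mem //.
- by apply: allpairs_uniq => // [[a b] [c d]] _ _ /= [-> ->].
- move=> [u v] /= /cL [hu hv].
  by apply/allpairsP; exists (u, v).
Qed.

Lemma fix_sumL (f : sinf -> R) w L : uniq L -> covers L w ->
  fix_sum f w = \sum_(u <- L) (if `[< hmul u w w >] then (-1) ^+ ell u * f u else 0).
Proof.
move=> uL cL; rewrite /fix_sum (fsum_list _ uL).
- apply: eq_bigr => u _; case: (pselect (hmul u w w)) => h.
    by rewrite mem_set // asboolT.
  rewrite asboolF //; case: ifP => // /set_mem //.
- by move=> u /= /cL [hu _].
Qed.

Lemma sum_collapse (T : eqType) (L : seq T) x0 (F : T -> R) : uniq L -> x0 \in L ->
  (forall x, x != x0 -> F x = 0) -> \sum_(x <- L) F x = F x0.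
Proof.
move=> uL hx H; rewrite (bigD1_seq x0) //= big1 ?addr0 // => x hx'; exact: H.
Qed.

Lemma sum_zero (T : eqType) (L : seq T) (F : T -> R) :
  (forall x, F x = 0) -> \sum_(x <- L) F x = 0.
Proof. by move=> H; apply: big1 => x _; exact: H. Qed.

End Ring.

End P4s.

Local Open Scope ring_scope.

Section Part1.
Variable R : comPzRingType.
Variables f g : sinf -> R.
Hypothesis nzd : forall w, non_zero_divisor (fix_sum f w).
Hypothesis fg : hstar f g = f.

Lemma id_in n : sinf_id \in allsinf n.
Proof. by apply: mem_allsinf. Qed.

Lemma step1 w : (forall v, v != w -> (exists u, hmul u v w) -> g v = hone R v) ->
  g w = hone R w.
Proof.
move=> IH.
set L := allsinf (sz w).
have uL : uniq L := allsinf_uniq _.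
have cL : covers L w := covers_all (leqnn _).
have wL : w \in L by apply: mem_allsinf.
have E := congr1 (fun F => F w) fg; rewrite /= (hstarL _ _ uL cL) in E.
have T u v : K R u v w * f u * g v =
   (if v == w then (if `[< hmul u w w >] then (-1) ^+ ell u * f u else 0) * g w else 0)
   + (if u == w then (if v == sinf_id then (if w != sinf_id then f w else 0) else 0) else 0).
  case: (pselect (hmul u v w)) => h.
    rewrite Kt //; case: (eqVneq v w) => [ev|nv].
      subst v; rewrite asboolT // addnK.
      case: (eqVneq u w) => [eu|nu]; last by rewrite addr0.
      by subst u; case: eqP => [->|]; rewrite ?eqxx /= addr0.
    rewrite add0r (IH v nv); last by exists u.
    case: (eqVneq v sinf_id) => [ev|nv'].
      subst v; have eu := H_idr_inv h; subst w.
      rewrite eqxx eq_sym nv ell_id addn0 subnn expr0 mul1r /hone eqxx mulr1 //.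
    by rewrite /hone (negbTE nv') mulr0; case: ifP.
  rewrite Kf // !mul0r; case: (eqVneq v w) => [ev|nv].
    subst v; rewrite asboolF // mul0r add0r.
    case: (eqVneq u w) => [eu|] //; subst u; by case: (eqVneq w sinf_id).
  rewrite add0r; case: (eqVneq u w) => [eu|] //; subst u.
  case: (eqVneq v sinf_id) => [ev|] //; subst v.
  by exfalso; apply: h; exact: H_idr.
have E2 : \sum_(u <- L) \sum_(v <- L) K R u v w * f u * g v =
   fix_sum f w * g w + (if w != sinf_id then f w else 0).
  rewrite (eq_bigr (fun u => (if `[< hmul u w w >] then (-1) ^+ ell u * f u else 0) * g w
        + (if u == w then (if w != sinf_id then f w else 0) else 0))).
    rewrite big_split /= -big_distrl /= -(fix_sumL _ uL cL).
    by rewrite (sum_collapse uL wL) ?eqxx // => x /negbTE ->.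
  move=> u _; rewrite (eq_bigr _ (fun v _ => T u v)) big_split /=.
  rewrite (sum_collapse uL wL); last by move=> x /negbTE ->.
  rewrite eqxx; congr (_ + _).
  case: (u == w); last by rewrite sum_zero.
  by rewrite (sum_collapse uL (id_in _)) ?eqxx // => x /negbTE ->.
rewrite E2 in E.
case: (eqVneq w sinf_id) => [ew|nw].
  subst w.
  have F : fix_sum f sinf_id = f sinf_id.
    rewrite (fix_sumL _ uL cL) (sum_collapse uL (id_in _)).
      by rewrite asboolT ?ell_id ?expr0 ?mul1r //; exact: H_idr.
    move=> x nx; rewrite asboolF //; move=> /H_idr_inv ex.
    by rewrite ex eqxx in nx.
  rewrite addr0 F in E.
  have H0 : g sinf_id - 1 = 0.
    have H := nzd (w := sinf_id) (x := g sinf_id - 1). apply: H.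
    by rewrite F mulrBr mulr1 E subrr.
  rewrite /hone; case: eqP => // _ /=; rewrite mulr1n; apply/eqP; by rewrite -subr_eq0 H0.
rewrite /hone (negbTE nw) /=.
rewrite mulr0n; have H := nzd (w := w) (x := g w); apply: H.
rewrite nw in E; apply: (addIr (f w)); by rewrite add0r E.
Qed.
Lemma part1 : g = hone R.
Proof.
apply: funext => w.
suff H : forall N0 n w, (sz w <= N0)%N -> (Phi N0 w <= n)%N -> g w = hone R w.
  exact: (H (sz w) (Phi (sz w) w) w (leqnn _) (leqnn _)).
move=> N0; elim=> [|n IH] w' hw hp; apply: step1 => v nv [u h].
  have := PHI h nv hw; lia.
have [_ hv _] := SUPP h.
apply: IH; first lia.
have := PHI h nv hw; lia.
Qed.
End Part1.

Local Open Scope ring_scope.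

Section Part2.
Variable R : comPzRingType.

Lemma hstar_1l (f : sinf -> R) : hstar (hone R) f = f.
Proof.
apply: funext => w.
set L := allsinf (sz w).
have uL : uniq L := allsinf_uniq _.
have cL : covers L w := covers_all (leqnn _).
rewrite (hstarL _ _ uL cL) (sum_collapse uL (id_in _)); last first.
  move=> x nx; apply: sum_zero => v; by rewrite /hone (negbTE nx) mulr0 mul0r.
rewrite (sum_collapse uL (_ : w \in L)); last 2 first.
- exact: mem_allsinf.
- move=> x nx; rewrite Kf ?mul0r // => /H_idl_inv ex; by rewrite ex eqxx in nx.
rewrite Kt; last exact: H_idl.
rewrite ell_id add0n subnn expr0 mul1r /hone.
by case: eqP => // _ /=; rewrite mulr1n mul1r.
Qed.

Lemma sign_comb u y x v w : hmul u y x -> hmul x v w ->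
  K R u y x * K R x v w = (-1) ^+ (ell u + ell y + ell v - ell w)%N.
Proof.
move=> h1 h2; rewrite Kt // Kt // -exprD.
have := LEN h1; have := LEN h2.
by move=> l2 l1; congr (_ ^+ _); lia.
Qed.

Lemma sign_comb2 u y v z w : hmul y v z -> hmul u z w ->
  K R u z w * K R y v z = (-1) ^+ (ell u + ell y + ell v - ell w)%N.
Proof.
move=> h1 h2; rewrite Kt // Kt // -exprD.
have := LEN h1; have := LEN h2.
by move=> l2 l1; congr (_ ^+ _); lia.
Qed.

Lemma KK u y v L w : uniq L -> covers L w ->
  \sum_(x <- L) K R x v w * K R u y x = \sum_(z <- L) K R u z w * K R y v z.
Proof.
move=> uL cL.
case: (pselect (exists x, hmul u y x /\ hmul x v w)) => [[x0 [h1 h2]]|nx].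
  have [z0 h3] := EX y v.
  have h4 := ASC1 h1 h2 h3.
  rewrite (sum_collapse uL (_ : x0 \in L)); last 2 first.
  - by have [] := cL _ _ h2.
  - move=> x nx; case: (pselect (hmul u y x)) => h.
      by move: nx; rewrite (UNQ h1 h) eqxx.
    by rewrite (Kf R h) mulr0.
  rewrite (sum_collapse uL (_ : z0 \in L)); last 2 first.
  - by have [] := cL _ _ h4.
  - move=> z nz; case: (pselect (hmul y v z)) => h.
      by move: nz; rewrite (UNQ h3 h) eqxx.
    by rewrite (Kf R h) mulr0.
  by rewrite [LHS]mulrC (sign_comb h1 h2) (sign_comb2 h3 h4).
rewrite sum_zero; last first.
  move=> x; case: (pselect (hmul u y x)) => h; last by rewrite (Kf R h) mulr0.
  case: (pselect (hmul x v w)) => h'; last by rewrite (Kf R h') mul0r.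
  by exfalso; apply: nx; exists x.
rewrite sum_zero // => z.
case: (pselect (hmul y v z)) => h; last by rewrite (Kf R h) mulr0.
case: (pselect (hmul u z w)) => h'; last by rewrite (Kf R h') mul0r.
exfalso; apply: nx; have [x hx] := EX u y; exists x; split => //.
exact: (ASC2 h h' hx).
Qed.

Lemma rot3 (L : seq sinf) (E : sinf -> sinf -> sinf -> R) :
  \sum_(b <- L) \sum_(c <- L) \sum_(d <- L) E b c d =
  \sum_(c <- L) \sum_(d <- L) \sum_(b <- L) E b c d.
Proof. rewrite exchange_big; apply: eq_bigr => c _; by rewrite exchange_big. Qed.

Lemma reorderL (L : seq sinf) (E : sinf -> sinf -> sinf -> sinf -> R) :
  \sum_(a <- L) \sum_(b <- L) \sum_(c <- L) \sum_(d <- L) E a b c d =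
  \sum_(c <- L) \sum_(d <- L) \sum_(b <- L) \sum_(a <- L) E a b c d.
Proof.
transitivity (\sum_(a <- L) \sum_(c <- L) \sum_(d <- L) \sum_(b <- L) E a b c d).
  by apply: eq_bigr => a _; rewrite rot3.
rewrite (rot3 L (fun a c d => \sum_(b <- L) E a b c d)).
apply: eq_bigr => c _; apply: eq_bigr => d _; by rewrite exchange_big.
Qed.

Lemma reorderR (L : seq sinf) (E : sinf -> sinf -> sinf -> sinf -> R) :
  \sum_(a <- L) \sum_(b <- L) \sum_(c <- L) \sum_(d <- L) E a b c d =
  \sum_(a <- L) \sum_(c <- L) \sum_(d <- L) \sum_(b <- L) E a b c d.
Proof. by apply: eq_bigr => a _; rewrite rot3. Qed.

Lemma hstar_assoc (f g h : sinf -> R) :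
  hstar (hstar f g) h = hstar f (hstar g h).
Proof.
apply: funext => w.
set L := allsinf (sz w).
have uL : uniq L := allsinf_uniq _.
have cL : covers L w := covers_all (leqnn _).
have cLx x : (sz x <= sz w)%N -> covers L x.
  by move=> hx; apply: covers_all.
rewrite !(hstarL _ _ uL cL).
transitivity (\sum_(x <- L) \sum_(v <- L) \sum_(u <- L) \sum_(y <- L)
    (K R x v w * K R u y x) * (f u * g y * h v)).
  apply: eq_bigr => x _; apply: eq_bigr => v _.
  case: (pselect (hmul x v w)) => hx; last first.
    rewrite (Kf R hx) !mul0r; apply/esym; apply: sum_zero => u; apply: sum_zero => y.
    by rewrite !mul0r.
  have [sx _ _] := SUPP hx.
  rewrite (hstarL _ _ uL (cLx _ sx)) mulr_sumr big_distrl /=.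
  apply: eq_bigr => u _; rewrite mulr_sumr big_distrl /=.
  by apply: eq_bigr => y _; rewrite !mulrA.
transitivity (\sum_(u <- L) \sum_(z <- L) \sum_(y <- L) \sum_(v <- L)
    (K R u z w * K R y v z) * (f u * g y * h v)); last first.
  apply: eq_bigr => u _; apply: eq_bigr => z _.
  case: (pselect (hmul u z w)) => hz; last first.
    rewrite (Kf R hz) !mul0r; apply: sum_zero => y; apply: sum_zero => v.
    by rewrite !mul0r.
  have [_ sz' _] := SUPP hz.
  rewrite (hstarL _ _ uL (cLx _ sz')) mulr_sumr /=.
  apply: eq_bigr => y _; rewrite mulr_sumr /=.
  apply: eq_bigr => v _; ring.
rewrite reorderL [RHS]reorderR.
apply: eq_bigr => u _; apply: eq_bigr => y _; apply: eq_bigr => v _.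
by rewrite -!big_distrl /= (KK _ _ _ uL cL).
Qed.

End Part2.

Theorem lemma4p4 (R : comPzRingType) (f g h : sinf -> R) :
  (forall w : sinf, non_zero_divisor (fix_sum f w)) ->
  (hstar f g = f -> g = hone R) /\
  (hstar f h = hone R -> hstar h f = hone R).
Proof.
move=> nzd; split; first exact: part1.
move=> E; apply: (part1 nzd).
by rewrite -hstar_assoc E hstar_1l.
Qed.
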